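(* Let $(\mathcal{C},\wedge,S)$ be a braided monoidal category, $T\in\mathcal{C}$, and $s,t:T\to T$ endomorphisms. The following are equivalent: (1) $\beta_{T,T}=s\wedge t$; (2) $\beta_{T,T}=t\wedge s$; (3) $\beta_{T,T}=ts\wedge\mathrm{id}_T$; (4) $\beta_{T,T}=st\wedge\mathrm{id}_T$; (5) $\beta_{T,T}=\mathrm{id}_T\wedge ts$; (6) $\beta_{T,T}=\mathrm{id}_T\wedge st$.
   Context: $\beta_{T,T}:T\wedge T\to T\wedge T$ is the braiding isomorphism. *)

(* Defs.v *)
Set Implicit Arguments.
Unset Strict Implicit.

Record BraidedMonoidalCategory : Type := {
  Ob : Type;
  Hom : Ob -> Ob -> Type;
  idm : forall A : Ob, Hom A A;
  comp : forall A B C : Ob, Hom B C -> Hom A B -> Hom A C;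
  comp_id_l : forall A B (f : Hom A B), comp (idm B) f = f;
  comp_id_r : forall A B (f : Hom A B), comp f (idm A) = f;
  comp_assoc : forall A B C D (h : Hom C D) (g : Hom B C) (f : Hom A B),
      comp h (comp g f) = comp (comp h g) f;

  (* monoidal product (the functor "∧") and unit object S *)
  tens : Ob -> Ob -> Ob;
  tens_hom : forall A B C D, Hom A B -> Hom C D -> Hom (tens A C) (tens B D);
  tens_id : forall A B, tens_hom (idm A) (idm B) = idm (tens A B);
  tens_comp : forall A1 B1 C1 A2 B2 C2
      (g1 : Hom B1 C1) (f1 : Hom A1 B1) (g2 : Hom B2 C2) (f2 : Hom A2 B2),
      tens_hom (comp g1 f1) (comp g2 f2) = comp (tens_hom g1 g2) (tens_hom f1 f2);
  unit_ob : Ob;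

  assoc : forall A B C, Hom (tens (tens A B) C) (tens A (tens B C));
  assoc_inv : forall A B C, Hom (tens A (tens B C)) (tens (tens A B) C);
  assoc_inv_l : forall A B C, comp (assoc_inv A B C) (assoc A B C) = idm _;
  assoc_inv_r : forall A B C, comp (assoc A B C) (assoc_inv A B C) = idm _;
  assoc_nat : forall A A' B B' C C' (f : Hom A A') (g : Hom B B') (h : Hom C C'),
      comp (assoc A' B' C') (tens_hom (tens_hom f g) h)
      = comp (tens_hom f (tens_hom g h)) (assoc A B C);

  lunit : forall A, Hom (tens unit_ob A) A;
  lunit_inv : forall A, Hom A (tens unit_ob A);
  lunit_inv_l : forall A, comp (lunit_inv A) (lunit A) = idm _;
  lunit_inv_r : forall A, comp (lunit A) (lunit_inv A) = idm _;
  lunit_nat : forall A B (f : Hom A B),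
      comp (lunit B) (tens_hom (idm unit_ob) f) = comp f (lunit A);
  runit : forall A, Hom (tens A unit_ob) A;
  runit_inv : forall A, Hom A (tens A unit_ob);
  runit_inv_l : forall A, comp (runit_inv A) (runit A) = idm _;
  runit_inv_r : forall A, comp (runit A) (runit_inv A) = idm _;
  runit_nat : forall A B (f : Hom A B),
      comp (runit B) (tens_hom f (idm unit_ob)) = comp f (runit A);

  pentagon : forall A B C D,
      comp (tens_hom (idm A) (assoc B C D))
           (comp (assoc A (tens B C) D) (tens_hom (assoc A B C) (idm D)))
      = comp (assoc A B (tens C D)) (assoc (tens A B) C D);
  triangle : forall A B,
      comp (tens_hom (idm A) (lunit B)) (assoc A unit_ob B)
      = tens_hom (runit A) (idm B);

  braid : forall A B, Hom (tens A B) (tens B A);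
  braid_inv : forall A B, Hom (tens B A) (tens A B);
  braid_inv_l : forall A B, comp (braid_inv A B) (braid A B) = idm _;
  braid_inv_r : forall A B, comp (braid A B) (braid_inv A B) = idm _;
  braid_nat : forall A A' B B' (f : Hom A A') (g : Hom B B'),
      comp (braid A' B') (tens_hom f g) = comp (tens_hom g f) (braid A B);
  hexagon1 : forall A B C,
      comp (assoc B C A) (comp (braid A (tens B C)) (assoc A B C))
      = comp (tens_hom (idm B) (braid A C))
             (comp (assoc B A C) (tens_hom (braid A B) (idm C)));
  hexagon2 : forall A B C,
      comp (assoc_inv C A B) (comp (braid (tens A B) C) (assoc_inv A B C))
      = comp (tens_hom (braid A C) (idm B))
             (comp (assoc_inv A C B) (tens_hom (idm A) (braid B C)))
}.

Arguments idm {b} A.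
Arguments comp {b A B C} _ _.
Arguments tens {b} _ _.
Arguments tens_hom {b A B C D} _ _.
Arguments braid {b} A B.
Arguments Hom {b} _ _.

(* Main.v *)
Require Import Defs.

Section Helpers.
Variable C : BraidedMonoidalCategory.
Variable T : Ob C.

Lemma cancel_l (x y : Hom (tens T T) (tens T T)) :
  comp (braid T T) x = comp (braid T T) y -> x = y.
Proof.
  intro H. rewrite <- (comp_id_l x), <- (comp_id_l y), <- (braid_inv_l T T),
    <- !comp_assoc, H. reflexivity.
Qed.

Lemma cancel_r (x y : Hom (tens T T) (tens T T)) :
  comp x (braid T T) = comp y (braid T T) -> x = y.
Proof.
  intro H. rewrite <- (comp_id_r x), <- (comp_id_r y), <- (braid_inv_r T T),
    !comp_assoc, H. reflexivity.
Qed.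

Lemma tc (a b c d : Hom T T) :
  comp (tens_hom a b) (tens_hom c d) = tens_hom (comp a c) (comp b d).
Proof. symmetry. apply tens_comp. Qed.

Lemma L1 (a b : Hom T T) : braid T T = tens_hom a b ->
  tens_hom a (idm T) = tens_hom (idm T) a /\ tens_hom b (idm T) = tens_hom (idm T) b.
Proof.
  intro H. split.
  - apply cancel_r. rewrite <- (braid_nat a (idm T)). rewrite H, !tc, !comp_id_l, !comp_id_r.
    reflexivity.
  - apply cancel_r. rewrite <- (braid_nat (idm T) b). rewrite H, !tc, !comp_id_l, !comp_id_r.
    reflexivity.
Qed.

Lemma K (s t : Hom T T) : braid T T = tens_hom (comp t s) (idm T) ->
  braid T T = tens_hom s t.
Proof.
  intro H. set (a := comp t s) in H.
  assert (Hat : tens_hom a t = tens_hom (comp t a) (idm T)).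
  { transitivity (comp (braid T T) (tens_hom (idm T) t)).
    - rewrite H, tc, comp_id_l, comp_id_r. reflexivity.
    - rewrite braid_nat, H, tc, comp_id_l. reflexivity. }
  assert (Has : tens_hom (comp a s) (idm T) = tens_hom (comp s a) (idm T)).
  { transitivity (comp (braid T T) (tens_hom s (idm T))).
    - rewrite H, tc, comp_id_l. reflexivity.
    - rewrite braid_nat, H, tc, comp_id_l, comp_id_r.
      transitivity (comp (braid T T) (tens_hom (idm T) s)).
      + rewrite H, tc, comp_id_l, comp_id_r. reflexivity.
      + rewrite braid_nat, H, tc, comp_id_l. reflexivity. }
  symmetry. apply cancel_l.
  transitivity (tens_hom (comp a s) t).
  { rewrite H, tc, comp_id_l. reflexivity. }
  transitivity (comp (tens_hom a t) (tens_hom s (idm T))).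
  { rewrite tc, comp_id_r. reflexivity. }
  rewrite Hat, tc, comp_id_l, <- comp_assoc.
  transitivity (comp (tens_hom t (idm T)) (tens_hom (comp a s) (idm T))).
  { rewrite tc, comp_id_l. reflexivity. }
  rewrite Has, tc, comp_id_l, comp_assoc, H, tc, comp_id_l. reflexivity.
Qed.

End Helpers.

Theorem proposition3p1 (Cat : BraidedMonoidalCategory) (T : Ob Cat)
    (s t : @Hom Cat T T) :
  (braid T T = tens_hom s t <-> braid T T = tens_hom t s)
  /\ (braid T T = tens_hom s t <-> braid T T = tens_hom (comp t s) (idm T))
  /\ (braid T T = tens_hom s t <-> braid T T = tens_hom (comp s t) (idm T))
  /\ (braid T T = tens_hom s t <-> braid T T = tens_hom (idm T) (comp t s))
  /\ (braid T T = tens_hom s t <-> braid T T = tens_hom (idm T) (comp s t)).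
Proof.
  assert (F : forall s t : Hom T T, braid T T = tens_hom s t ->
    braid T T = tens_hom t s /\ braid T T = tens_hom (comp t s) (idm T)
    /\ braid T T = tens_hom (comp s t) (idm T)
    /\ braid T T = tens_hom (idm T) (comp t s)
    /\ braid T T = tens_hom (idm T) (comp s t)).
  { clear s t. intros s t H. destruct (@L1 Cat T _ _ H) as [Hs Ht].
    assert (E1 : tens_hom s t = comp (tens_hom s (idm T)) (tens_hom (idm T) t))
      by (rewrite tc, comp_id_l, comp_id_r; reflexivity).
    assert (E2 : tens_hom s t = comp (tens_hom (idm T) t) (tens_hom s (idm T)))
      by (rewrite tc, comp_id_l, comp_id_r; reflexivity).
    repeat split; rewrite H.
    - rewrite E2, Hs, <- Ht, tc, comp_id_l, comp_id_r. reflexivity.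
    - rewrite E2, <- Ht, tc, comp_id_l. reflexivity.
    - rewrite E1, <- Ht, tc, comp_id_l. reflexivity.
    - rewrite E2, Hs, tc, comp_id_l. reflexivity.
    - rewrite E1, Hs, tc, comp_id_l. reflexivity. }
  assert (G : forall x : Hom T T, braid T T = tens_hom (idm T) x ->
     braid T T = tens_hom x (idm T)).
  { intros x H. destruct (@L1 Cat T _ _ H) as [_ Hx]. rewrite H, Hx. reflexivity. }
  repeat split; intro H;
    first [ exact (@K Cat T _ _ H) | exact (@K Cat T _ _ (G _ H)) | destruct (F s t H) as (?&?&?&?&?); assumption
          | destruct (F t s H) as (?&?&?&?&?); assumption
          | destruct (F s t (@K Cat T _ _ H)) as (?&?&?&?&?); assumption
          | destruct (F t s (@K Cat T _ _ H)) as (?&?&?&?&?); assumption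
          | destruct (F s t (@K Cat T _ _ (G _ H))) as (?&?&?&?&?); assumption
          | destruct (F t s (@K Cat T _ _ (G _ H))) as (?&?&?&?&?); assumption ].
Qed.
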